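(* For $(\sigma,u)\in\mathbb R\times\mathbb R^3$ let $R=R(\sigma,u)=2(uu^\top-\sigma[u]_\times)+(\sigma^2-\|u\|^2)I$. For vectors $q_s',q_s''\in\mathbb R^3$, $s\in\{i,j,k\}$, define: - $G_{ijk}$: the $3\times 3$ matrix with rows $(Rq_i'\times q_i'')^\top$, $(Rq_j'\times q_j'')^\top$, $(Rq_k'\times q_k'')^\top$; - for $l\in\{j,k\}$, the $1\times 2$ row $F_{il}=\big[\,q_l''^\top R[q_i']_\times q_l',\ \ -q_l''^\top [q_i'']_\times R\, q_l'\,\big]$, and $F_{ijk}=\begin{bmatrix}F_{ij}\\ F_{ik}\end{bmatrix}$ (a $2\times2$ matrix). Then, as an identity in $(\sigma,u)$ (up to a global sign), $$\det G_{ijk}=\pm(\|u\|^2+\sigma^2)\,\det F_{ijk}.$$ In particular, setting $\sigma=1$ and $u=v$, the same identity holds with the factor $\|v\|^2+1$.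
   Context: $[a]_\times$ is the skew-symmetric matrix with $[a]_\times b=a\times b$. When $\|u\|^2+\sigma^2=1$, $R(\sigma,u)$ is the rotation matrix of the unit quaternion $[\sigma\ u^\top]$; in general $R(\sigma,u)$ equals $(\sigma^2+\|u\|^2)$ times a rotation matrix. $F_{il}$ arises by substituting $t'=\lambda_i q_i'$, $t''=\mu_i q_i''$ into the epipolar constraint $q_l''^\top(R[t']_\times-[t'']_\times R)q_l'=0$, giving $F_{il}[\lambda_i\ \mu_i]^\top=0$. *)

(* Defs.v *)
From HB Require Import structures.
From mathcomp Require Import all_boot all_order all_algebra.
Set Implicit Arguments. Unset Strict Implicit. Unset Printing Implicit Defensive.
Import Order.TTheory GRing.Theory Num.Theory.
Local Open Scope ring_scope.

Section Defs.
Variable R : realFieldType.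

Definition cc (a : 'cV[R]_3) (k : nat) : R := a (inord k) 0.

Definition cross (a b : 'cV[R]_3) : 'cV[R]_3 :=
  \col_(i < 3)
    (if (i : nat) == 0%N then cc a 1 * cc b 2 - cc a 2 * cc b 1
     else if (i : nat) == 1%N then cc a 2 * cc b 0 - cc a 0 * cc b 2
     else cc a 0 * cc b 1 - cc a 1 * cc b 0).

Definition evec (j : 'I_3) : 'cV[R]_3 := \col_(i < 3) (i == j)%:R.

Definition skew (a : 'cV[R]_3) : 'M[R]_3 :=
  \matrix_(i < 3, j < 3) cross a (evec j) i 0.

Definition norm2 (u : 'cV[R]_3) : R := \sum_(i < 3) u i 0 ^+ 2.

Definition rotR (sigma : R) (u : 'cV[R]_3) : 'M[R]_3 :=
  2%:R *: (u *m u^T - sigma *: skew u) + (sigma ^+ 2 - norm2 u) *: 1%:M.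

Definition Gmat (Rm : 'M[R]_3) (qi1 qi2 qj1 qj2 qk1 qk2 : 'cV[R]_3) : 'M[R]_3 :=
  \matrix_(m < 3, n < 3)
    (if (m : nat) == 0%N then cross (Rm *m qi1) qi2 n 0
     else if (m : nat) == 1%N then cross (Rm *m qj1) qj2 n 0
     else cross (Rm *m qk1) qk2 n 0).

Definition Fent1 (Rm : 'M[R]_3) (qi1 ql1 ql2 : 'cV[R]_3) : R :=
  (ql2^T *m Rm *m skew qi1 *m ql1) 0 0.
Definition Fent2 (Rm : 'M[R]_3) (qi2 ql1 ql2 : 'cV[R]_3) : R :=
  - (ql2^T *m skew qi2 *m Rm *m ql1) 0 0.

Definition Fmat (Rm : 'M[R]_3) (qi1 qi2 qj1 qj2 qk1 qk2 : 'cV[R]_3) : 'M[R]_2 :=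
  \matrix_(a < 2, b < 2)
    (if (a : nat) == 0%N then
       (if (b : nat) == 0%N then Fent1 Rm qi1 qj1 qj2 else Fent2 Rm qi2 qj1 qj2)
     else
       (if (b : nat) == 0%N then Fent1 Rm qi1 qk1 qk2 else Fent2 Rm qi2 qk1 qk2)).

End Defs.

(* Main.v *)
Require Import Defs.
From HB Require Import structures.
From mathcomp Require Import all_boot all_order all_algebra.
From mathcomp Require Import ring.
Import Order.TTheory GRing.Theory Num.Theory.
Local Open Scope ring_scope.

Section S.
Variable R : realFieldType.
Notation o1 := (lift ord0 (ord0 : 'I_2)).
Notation o2 := (lift ord0 (lift ord0 (ord0 : 'I_1))).

Definition vec3 (x y z : R) : 'cV[R]_3 := \col_(i < 3) nth 0 [:: x; y; z] i.
Definition mat3 (a b c d e f g h k : R) : 'M[R]_3 :=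
  \matrix_(i < 3, j < 3) nth 0 (nth [::] [:: [:: a;b;c];[::d;e;f];[::g;h;k]] i) j.

Lemma det3E a b c d e f g h k : \det (mat3 a b c d e f g h k) =
  a*(e*k - f*h) - b*(d*k-f*g) + c*(d*h-e*g).
Proof.
rewrite (expand_det_row _ ord0) !big_ord_recl big_ord0 /cofactor.
rewrite !(expand_det_row _ ord0) !big_ord_recl !big_ord0 /cofactor !det_mx11 !mxE /=.
rewrite !expr0 !expr1. ring.
Qed.

Lemma det2E (A : 'M[R]_2) : \det A =
  A ord0 ord0 * A (lift ord0 ord0) (lift ord0 ord0) - A ord0 (lift ord0 ord0) * A (lift ord0 ord0) ord0.
Proof.
rewrite (expand_det_row _ ord0) !big_ord_recl big_ord0 /cofactor !det_mx11 !mxE /=.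
rewrite !expr0 !expr1.
have e1 : (lift ord0 (0:'I_1) : 'I_2) = lift ord0 ord0 by apply: val_inj.
have e2 : (lift (lift ord0 ord0) (0:'I_1) : 'I_2) = ord0 by apply: val_inj.
rewrite e1 e2.
ring.
Qed.

Lemma vecE (v : 'cV[R]_3) : v = vec3 (v ord0 0) (v o1 0) (v o2 0).
Proof.
apply/matrixP => i j; rewrite !mxE ord1.
by case: i => [[|[|[|]]] Hi] //=; congr (v _ _); apply: val_inj.
Qed.

Lemma mx3E (A : 'M[R]_3) : A = mat3 (A ord0 ord0) (A ord0 o1) (A ord0 o2)
  (A o1 ord0) (A o1 o1) (A o1 o2) (A o2 ord0) (A o2 o1) (A o2 o2).
Proof.
apply/matrixP => i j; rewrite !mxE.
by case: i => [[|[|[|]]] Hi]; case: j => [[|[|[|]]] Hj] //=; congr (A _ _); apply: val_inj.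
Qed.

Lemma I0 : (inord 0 : 'I_3) = ord0. Proof. by apply: val_inj; rewrite /= inordK. Qed.
Lemma I1 : (inord 1 : 'I_3) = o1. Proof. by apply: val_inj; rewrite /= inordK. Qed.
Lemma I2 : (inord 2 : 'I_3) = o2. Proof. by apply: val_inj; rewrite /= inordK. Qed.

Ltac crunch :=
  rewrite /Gmat /Fent1 /Fent2 /cross /Defs.skew /evec /cc /vec3 /mat3;
  do 4! rewrite ?mxE ?big_ord_recl ?big_ord0 ?I0 ?I1 ?I2 /=.

Lemma test x0 x1 x2 y0 y1 y2 : cross (vec3 x0 x1 x2) (vec3 y0 y1 y2) =
  Defs.skew (vec3 x0 x1 x2) *m vec3 y0 y1 y2.
Proof.
apply/matrixP => i j.
rewrite ord1.
case: i => [[|[|[|]]] Hi] //=;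
unfold Gmat, Fent1, Fent2, Defs.skew, evec, cross, cc, vec3, mat3;
do 4! rewrite ?mxE ?big_ord_recl ?big_ord0 ?I0 ?I1 ?I2 /=.
all: ring.
Qed.


Lemma v0 x y z : vec3 x y z ord0 0 = x. Proof. by rewrite mxE. Qed.
Lemma v1 x y z : vec3 x y z o1 0 = y. Proof. by rewrite mxE. Qed.
Lemma v2 x y z : vec3 x y z o2 0 = z. Proof. by rewrite mxE. Qed.

Lemma crossE a b c d e f : cross (vec3 a b c) (vec3 d e f) =
  vec3 (b * f - c * e) (c * d - a * f) (a * e - b * d).
Proof.
apply/matrixP => i j; rewrite ord1.
case: i => [[|[|[|]]] Hi] //=;
unfold cross, cc, vec3; do 2! rewrite ?mxE ?I0 ?I1 ?I2 /=.
all: by [].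
Qed.

Lemma mulE a b c d e f g h k x y z : mat3 a b c d e f g h k *m vec3 x y z =
  vec3 (a*x+b*y+c*z) (d*x+e*y+f*z) (g*x+h*y+k*z).
Proof.
apply/matrixP => i j; rewrite ord1.
case: i => [[|[|[|]]] Hi] //=;
unfold vec3, mat3; do 3! rewrite ?mxE ?big_ord_recl ?big_ord0 /=; ring.
Qed.

Lemma dotE a b c x y z : ((vec3 a b c)^T *m vec3 x y z) 0 0 = a*x+b*y+c*z.
Proof.
unfold vec3; do 3! rewrite ?mxE ?big_ord_recl ?big_ord0 /=; ring.
Qed.

Lemma skewE a b c : Defs.skew (vec3 a b c) = mat3 0 (-c) b c 0 (-a) (-b) a 0.
Proof.
apply/matrixP => i j.
case: i => [[|[|[|]]] Hi]; case: j => [[|[|[|]]] Hj] //=;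
unfold Defs.skew, evec, cross, cc, vec3, mat3; do 3! rewrite ?mxE ?I0 ?I1 ?I2 /=; ring.
Qed.

Lemma GmatE M a b c d e f : Gmat M a b c d e f =
  mat3 (cross (M *m a) b ord0 0) (cross (M *m a) b o1 0) (cross (M *m a) b o2 0)
       (cross (M *m c) d ord0 0) (cross (M *m c) d o1 0) (cross (M *m c) d o2 0)
       (cross (M *m e) f ord0 0) (cross (M *m e) f o1 0) (cross (M *m e) f o2 0).
Proof.
apply/matrixP => i j.
case: i => [[|[|[|]]] Hi]; case: j => [[|[|[|]]] Hj] //=; rewrite !mxE /=.
all: try (f_equal; apply: val_inj; done).
Qed.

Lemma Fent1E (M : 'M[R]_3) (a b c : 'cV[R]_3) : Fent1 M a b c = ((c^T *m (M *m (Defs.skew a *m b))) 0 0).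
Proof. by rewrite /Fent1 !mulmxA. Qed.
Lemma Fent2E (M : 'M[R]_3) (a b c : 'cV[R]_3) : Fent2 M a b c = - ((c^T *m (Defs.skew a *m (M *m b))) 0 0).
Proof. by rewrite /Fent2 !mulmxA. Qed.

Lemma core r00 r01 r02 r10 r11 r12 r20 r21 r22
  a0 a1 a2 b0 b1 b2 c0 c1 c2 d0 d1 d2 e0 e1 e2 f0 f1 f2 :
  \det (Gmat (mat3 r00 r01 r02 r10 r11 r12 r20 r21 r22) (vec3 a0 a1 a2) (vec3 b0 b1 b2)
     (vec3 c0 c1 c2) (vec3 d0 d1 d2) (vec3 e0 e1 e2) (vec3 f0 f1 f2)) =
  - ((((vec3 d0 d1 d2)^T *m cross (mat3 r00 r01 r02 r10 r11 r12 r20 r21 r22 *m vec3 a0 a1 a2)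
        (mat3 r00 r01 r02 r10 r11 r12 r20 r21 r22 *m vec3 c0 c1 c2)) 0 0)
     * Fent2 (mat3 r00 r01 r02 r10 r11 r12 r20 r21 r22) (vec3 b0 b1 b2) (vec3 e0 e1 e2) (vec3 f0 f1 f2)
   - Fent2 (mat3 r00 r01 r02 r10 r11 r12 r20 r21 r22) (vec3 b0 b1 b2) (vec3 c0 c1 c2) (vec3 d0 d1 d2)
     * (((vec3 f0 f1 f2)^T *m cross (mat3 r00 r01 r02 r10 r11 r12 r20 r21 r22 *m vec3 a0 a1 a2)
        (mat3 r00 r01 r02 r10 r11 r12 r20 r21 r22 *m vec3 e0 e1 e2)) 0 0)).
Proof.
rewrite GmatE !Fent2E.
rewrite !skewE !mulE !crossE !dotE !v0 !v1 !v2 det3E.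
ring.
Qed.

Lemma coreM (M : 'M[R]_3)
  a0 a1 a2 b0 b1 b2 c0 c1 c2 d0 d1 d2 e0 e1 e2 f0 f1 f2 :
  \det (Gmat M (vec3 a0 a1 a2) (vec3 b0 b1 b2)
     (vec3 c0 c1 c2) (vec3 d0 d1 d2) (vec3 e0 e1 e2) (vec3 f0 f1 f2)) =
  - ((((vec3 d0 d1 d2)^T *m cross (M *m vec3 a0 a1 a2) (M *m vec3 c0 c1 c2)) 0 0)
     * Fent2 M (vec3 b0 b1 b2) (vec3 e0 e1 e2) (vec3 f0 f1 f2)
   - Fent2 M (vec3 b0 b1 b2) (vec3 c0 c1 c2) (vec3 d0 d1 d2)
     * (((vec3 f0 f1 f2)^T *m cross (M *m vec3 a0 a1 a2) (M *m vec3 e0 e1 e2)) 0 0)).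
Proof. rewrite (mx3E M); exact: core. Qed.

Lemma FmatE (M : 'M[R]_3) (a b c d e f : 'cV[R]_3) :
  \det (Fmat M a b c d e f) = Fent1 M a c d * Fent2 M b e f - Fent2 M b c d * Fent1 M a e f.
Proof. by rewrite det2E !mxE. Qed.

Definition rotM (s u0 u1 u2 : R) :=
  let n := u0^+2 + u1^+2 + u2^+2 in
  mat3 (2%:R*u0^+2 + s^+2 - n) (2%:R*(u0*u1 + s*u2)) (2%:R*(u0*u2 - s*u1))
       (2%:R*(u1*u0 - s*u2)) (2%:R*u1^+2 + s^+2 - n) (2%:R*(u1*u2 + s*u0))
       (2%:R*(u2*u0 + s*u1)) (2%:R*(u2*u1 - s*u0)) (2%:R*u2^+2 + s^+2 - n).

Lemma norm2E u0 u1 u2 : norm2 (vec3 u0 u1 u2) = u0^+2 + u1^+2 + u2^+2.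
Proof. rewrite /norm2 !big_ord_recl big_ord0 /vec3 !mxE /=; ring. Qed.

Lemma rotRE s u0 u1 u2 : rotR s (vec3 u0 u1 u2) = rotM s u0 u1 u2.
Proof.
rewrite /rotR norm2E skewE /rotM.
apply/matrixP => i j.
case: i => [[|[|[|]]] Hi]; case: j => [[|[|[|]]] Hj] //=;
unfold vec3, mat3; do 3! rewrite ?mxE ?big_ord_recl ?big_ord0 /=; ring.
Qed.

Lemma link s u0 u1 u2 a0 a1 a2 c0 c1 c2 d0 d1 d2 :
  (u0^+2 + u1^+2 + u2^+2 + s^+2) * Fent1 (rotM s u0 u1 u2) (vec3 a0 a1 a2) (vec3 c0 c1 c2) (vec3 d0 d1 d2)
  = ((vec3 d0 d1 d2)^T *m cross (rotM s u0 u1 u2 *m vec3 a0 a1 a2) (rotM s u0 u1 u2 *m vec3 c0 c1 c2)) 0 0.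
Proof.
rewrite Fent1E /rotM skewE !mulE !crossE !dotE; ring.
Qed.

End S.

Theorem theorem3 (R : realFieldType) :
  exists s : R, (s = 1 \/ s = -1) /\
  forall (sigma : R) (u qi1 qi2 qj1 qj2 qk1 qk2 : 'cV[R]_3),
    \det (Gmat (rotR sigma u) qi1 qi2 qj1 qj2 qk1 qk2)
    = s * (norm2 u + sigma ^+ 2) * \det (Fmat (rotR sigma u) qi1 qi2 qj1 qj2 qk1 qk2).
Proof.
exists (-1); split; first by right.
move=> sigma u qi1 qi2 qj1 qj2 qk1 qk2.
rewrite (@vecE _ u) (@vecE _ qi1) (@vecE _ qi2) (@vecE _ qj1) (@vecE _ qj2) (@vecE _ qk1) (@vecE _ qk2).
rewrite norm2E rotRE.
rewrite coreM FmatE -!link.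
ring.
Qed.
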